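(* Let $p$ be a prime, $\alpha$ a positive integer, and $n,k,m$ nonnegative integers with $k\le n$. Suppose that $u_1,\dots,u_{n-k}\in\mathbb{Z}^n$ and $v_1,\dots,v_m\in\mathbb{Z}^n$ satisfy \begin{align*} u_i\cdot u_i&\not\equiv 0\pmod{p^\alpha}\ \text{for all } i,\\ u_i\cdot u_j&\equiv 0\pmod{p^\alpha}\ \text{for all } i\neq j,\\ v_i\cdot v_j&\equiv 0\pmod{p^\alpha}\ \text{for all } i,j,\\ u_i\cdot v_j&\equiv 0\pmod{p^\alpha}\ \text{for all } i,j. \end{align*} Then the subspace of $\mathbb{F}_p^n$ spanned by $v_1\bmod p,\dots,v_m\bmod p$ has dimension at most $k/2$.
   Context: Here $x\cdot y=\sum_t x^{(t)}y^{(t)}$ denotes the standard integer dot product on $\mathbb{Z}^n$, and $v\bmod p$ denotes the coordinatewise reduction into $\mathbb{F}_p^n$. *)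

(* Defs.v *)
From HB Require Import structures.
From mathcomp Require Import all_boot all_order all_algebra.
Set Implicit Arguments. Unset Strict Implicit. Unset Printing Implicit Defensive.
Import Order.TTheory GRing.Theory Num.Theory.
Local Open Scope ring_scope.

Definition zdot (n : nat) (x y : 'rV[int]_n) : int :=
  \sum_(t < n) x 0 t * y 0 t.

Definition modp_vec (p n : nat) (v : 'rV[int]_n) : 'rV['F_p]_n :=
  map_mx (fun z : int => z%:~R) v.

(* Main.v *)
Require Import Defs.
From HB Require Import structures.
From mathcomp Require Import all_boot all_order all_algebra.
From mathcomp Require Import zify.
Import Order.TTheory GRing.Theory Num.Theory.
Local Open Scope ring_scope.
Set Implicit Arguments. Unset Strict Implicit. Unset Printing Implicit Defensive.

Lemma zdot_sym n (x y : 'rV[int]_n) : zdot x y = zdot y x.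
Proof. by rewrite /zdot; apply: eq_bigr => t _; rewrite mulrC. Qed.

Lemma zdot_addl n (x y z : 'rV[int]_n) : zdot (x + y) z = zdot x z + zdot y z.
Proof. by rewrite /zdot -big_split; apply: eq_bigr => t _; rewrite mxE mulrDl. Qed.

Lemma zdot_suml n (I : finType) (a : I -> int) (f : I -> 'rV[int]_n) y :
  zdot (\sum_i a i *: f i) y = \sum_i a i * zdot (f i) y.
Proof.
rewrite /zdot.
under eq_bigr do rewrite summxE mulr_suml.
rewrite exchange_big; apply: eq_bigr => i _; rewrite mulr_sumr.
by apply: eq_bigr => t _; rewrite mxE mulrA.
Qed.

Lemma zdot_sumr n (I : finType) (a : I -> int) (f : I -> 'rV[int]_n) y :
  zdot y (\sum_i a i *: f i) = \sum_i a i * zdot y (f i).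
Proof.
by rewrite zdot_sym zdot_suml; apply: eq_bigr => i _; rewrite zdot_sym.
Qed.

Lemma zdot0l n (y : 'rV[int]_n) : zdot 0 y = 0.
Proof. by rewrite /zdot big1 // => t _; rewrite mxE mul0r. Qed.

Lemma modp_vecD p n (x y : 'rV[int]_n) : modp_vec p (x + y) = modp_vec p x + modp_vec p y.
Proof. by apply/rowP => t; rewrite !mxE rmorphD. Qed.

Lemma modp_vec0 p n : modp_vec p (0 : 'rV[int]_n) = 0.
Proof. by apply/rowP => t; rewrite !mxE rmorph0. Qed.

Lemma modp_vec_sum p n (I : finType) (a : I -> int) (f : I -> 'rV[int]_n) :
  modp_vec p (\sum_i a i *: f i) = \sum_i (a i)%:~R *: modp_vec p (f i).
Proof.
apply/rowP => t; rewrite !mxE summxE rmorph_sum summxE.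
by apply: eq_bigr => i _; rewrite !mxE rmorphM.
Qed.

Lemma red_zdot p n (x y : 'rV[int]_n) :
  (zdot x y)%:~R = \sum_t (modp_vec p x) 0 t * (modp_vec p y) 0 t :> 'F_p.
Proof. by rewrite rmorph_sum; apply: eq_bigr => t _; rewrite !mxE rmorphM. Qed.

Lemma red_eq0 p (z : int) : prime p -> ((z%:~R : 'F_p) == 0) = (p%:Z %| z)%Z.
Proof.
move=> hp; rewrite dvdzE /=.
case: z => m /=.
  apply/eqP/idP => [h|].
    have h' : (m%:R : 'F_p) = 0 by exact: h.
    have := val_Fp_nat hp m; rewrite h' /= => /esym /eqP; exact.
  by move=> /dvdnP[c ->]; rewrite -?pmulrn natrM pchar_Fp_0 // mulr0.
rewrite NegzE mulrNz oppr_eq0 -pmulrn.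

move: m.+1 => m1.
apply/eqP/idP => [h|].
  have h' : (m1%:R : 'F_p) = 0 by exact: h.
  have := val_Fp_nat hp m1; rewrite h' /= => /esym /eqP; exact.
by move=> /dvdnP[c ->]; rewrite -?pmulrn natrM pchar_Fp_0 // mulr0.
Qed.

Definition liftF p (x : 'F_p) : int := (val x)%:Z.

Lemma liftFK p (x : 'F_p) : prime p -> ((liftF x)%:~R : 'F_p) = x.
Proof.
move=> hp; rewrite /liftF -pmulrn.
apply: val_inj => /=. rewrite val_Fp_nat //.
rewrite modn_small //. have := ltn_ord x. move: (val x) => y. by rewrite Fp_cast.
Qed.

Lemma card_indep N n (F : 'I_N -> 'rV[int]_n) :
  (forall x : 'I_N -> int, \sum_i x i *: F i = 0 -> forall i, x i = 0) ->
  (N <= n)%N.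
Proof.
move=> hF; rewrite leqNgt; apply/negP => ltnN.
pose M : 'M[int]_(N, n) := \matrix_(a, t) F a 0 t.
have [L uL [R uR [d _ defM]]] := int_Smith_normal_form M.
pose i0 : 'I_N := Ordinal ltnN.
pose x := row i0 (invmx L).
have xM : x *m M = 0.
  rewrite defM /x -row_mul !mulmxA mulVmx // mul1mx row_mul.
  have -> : row i0 (\matrix_(i, j) (d`_i *+ (i == j :> nat)) : 'M[int]_(N, n)) = 0.
    apply/rowP => j; rewrite !mxE.
    have : (j < n)%N := ltn_ord j.
    by case: eqP => // <-; rewrite ltnn.
  by rewrite mul0mx.
have x0 : x = 0.
  apply/rowP => a.
  rewrite [RHS]mxE; apply: (hF (fun a => x 0 a)).
  apply: etrans _ xM; rewrite mulmx_sum_row.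
  by apply: eq_bigr => b _; congr (_ *: _); apply/rowP => t; rewrite !mxE.
have : x *m L = row i0 1%:M by rewrite /x -row_mul mulVmx.
rewrite x0 mul0mx => /rowP /(_ i0); rewrite !mxE eqxx /=.
by move/eqP; rewrite eq_sym oner_eq0.
Qed.

Lemma descent (p : nat) N n (F : 'I_N -> 'rV[int]_n) : (1 < p)%N ->
  (forall x : 'I_N -> int, \sum_i x i *: F i = 0 -> forall i, (p%:Z %| x i)%Z) ->
  (forall x : 'I_N -> int, \sum_i x i *: F i = 0 -> forall i, x i = 0).
Proof.
move=> p1 hcore.
suff H : forall s (x : 'I_N -> int), (\sum_i `|x i|%N <= s)%N ->
   \sum_i x i *: F i = 0 -> forall i, x i = 0.
  by move=> x; apply: (H _ x (leqnn _)).
elim=> [|s IH] x hs hx i.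
  apply/eqP; rewrite -absz_eq0 -leqn0; apply: leq_trans hs.
  by rewrite (bigD1 i) //= leq_addr.
have hd := hcore x hx.
pose y j := (x j %/ p%:Z)%Z.
have xy j : x j = y j * p%:Z by rewrite /y divzK.
have hy : \sum_j y j *: F j = 0.
  apply/rowP => t; move/rowP: hx => /(_ t); rewrite !mxE !summxE.
  under eq_bigr do rewrite mxE xy -mulrA mulrCA.
  rewrite -mulr_sumr => /eqP; rewrite mulf_eq0 orbC => /orP[/eqP h|].
    by rewrite -[RHS]h; apply: eq_bigr => k _; rewrite mxE.
  by move=> /eqP [] p0; move: p1; rewrite p0.
have sxy : (\sum_j `|x j| = (\sum_j `|y j|) * p)%N.
  by rewrite big_distrl /=; apply: eq_bigr => j _; rewrite xy abszM.
have hs' : (\sum_j `|y j| <= s)%N.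
  move: hs; rewrite sxy; move: (\sum_j `|y j|)%N => S; nia.
by rewrite xy (IH y hs' hy i) mul0r.
Qed.

Lemma coprime_q p alpha (z : int) : prime p -> ~~ (p%:Z %| z)%Z ->
  coprimez (p ^ alpha)%:Z z.
Proof.
move=> hp hz; rewrite coprimezE /=; apply: coprimeXl.
by rewrite prime_coprime.
Qed.

Lemma p_dvd_q p alpha : (0 < alpha)%N -> (p%:Z %| (p ^ alpha)%:Z)%Z.
Proof. by move=> ha; rewrite dvdzE /= dvdn_exp. Qed.

Lemma core p alpha n N r (hp : prime p) (ha : (0 < alpha)%N)
  (u : 'I_N -> 'rV[int]_n) (bv w : 'I_r -> 'rV[int]_n)
  (huu : forall i, ~~ ((p ^ alpha)%:Z %| zdot (u i) (u i))%Z)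
  (huu' : forall i j, i != j -> ((p ^ alpha)%:Z %| zdot (u i) (u j))%Z)
  (hub : forall i j, ((p ^ alpha)%:Z %| zdot (u i) (bv j))%Z)
  (hbb : forall i j, ((p ^ alpha)%:Z %| zdot (bv i) (bv j))%Z)
  (hG : forall j l, (zdot (w j) (bv l))%:~R = ((j == l)%:R : 'F_p))
  (hfree : forall y : 'I_r -> 'F_p,
     \sum_j y j *: modp_vec p (bv j) = 0 -> forall j, y j = 0)
  (a : 'I_N -> int) (b c : 'I_r -> int)
  (hS : \sum_i a i *: u i + \sum_j b j *: bv j + \sum_j c j *: w j = 0) :
  (forall i, (p%:Z %| a i)%Z) /\ (forall j, (p%:Z %| b j)%Z) /\ (forall j, (p%:Z %| c j)%Z).
Proof.
have dot y : \sum_i a i * zdot (u i) y + \sum_j b j * zdot (bv j) y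
             + \sum_j c j * zdot (w j) y = 0.
  by rewrite -!zdot_suml -!zdot_addl hS zdot0l.
have hc : forall l, ((p ^ alpha)%:Z %| c l)%Z.
  have h1 l : ((p ^ alpha)%:Z %| \sum_j c j * zdot (w j) (bv l))%Z.
    have := dot (bv l); rewrite addrC => /eqP; rewrite addr_eq0 => /eqP ->.
    rewrite rpredN rpredD // rpred_sum // => j _.
      by rewrite dvdz_mull // zdot_sym.
    exact: dvdz_mull.
  pose G : 'M[int]_r := \matrix_(j, l) zdot (w j) (bv l).
  pose cr : 'rV[int]_r := \row_j c j.
  have h2 (l : 'I_r) : ((p ^ alpha)%:Z %| (cr *m G) ord0 l)%Z.
    rewrite mxE (eq_bigr (fun j => c j * zdot (w j) (bv l))) ?h1 // => j _.
    by rewrite !mxE.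
  have h3 (l : 'I_r) : ((p ^ alpha)%:Z %| (cr *m G *m \adj G) ord0 l)%Z.
    by rewrite mxE rpred_sum // => j _; apply: dvdz_mulr.
  have e3 : cr *m G *m \adj G = \det G *: cr.
    by rewrite -mulmxA mul_mx_adj mul_mx_scalar.
  have hdet : ((\det G)%:~R : 'F_p) = 1.
    rewrite -det_map_mx.
    have -> : map_mx (fun z : int => (z%:~R : 'F_p)) G = 1%:M.
      by apply/matrixP => j l; rewrite !mxE hG.
    exact: det1.
  have cop : coprimez (p ^ alpha)%:Z (\det G).
    apply: coprime_q => //; rewrite -red_eq0 // hdet; exact: oner_neq0.
  move=> l; have := h3 l; rewrite e3 !mxE mulrC Gauss_dvdzl //.
have hA : forall l, (p%:Z %| a l)%Z.
  move=> l; apply/negPn/negP => nal.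
  have h1 : ((p ^ alpha)%:Z %| a l * zdot (u l) (u l))%Z.
    have := dot (u l); rewrite (bigD1 l) //= -addrA -addrA => /eqP; rewrite addr_eq0 => /eqP ->.
    rewrite rpredN rpredD // ?rpredD // ?rpred_sum // => [j hj|j _|j _].
    - by rewrite dvdz_mull // huu' // eq_sym.
    - by rewrite dvdz_mull // zdot_sym.
    - by rewrite dvdz_mulr.
  move: h1; rewrite Gauss_dvdzr ?(negPf (huu l)) //.
  exact: coprime_q.
split => //; split; last by move=> j; apply: dvdz_trans (p_dvd_q p ha) (hc j).
have := congr1 (@modp_vec p n) hS.
rewrite !modp_vecD !modp_vec_sum modp_vec0.
rewrite big1 ?add0r => [|i _]; last first.
  by apply/eqP; rewrite scaler_eq0 red_eq0 // hA.
rewrite [X in _ + X]big1 ?addr0 => [hB j|j _]; last first.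
  apply/eqP; rewrite scaler_eq0 red_eq0 //.
  by rewrite (dvdz_trans (p_dvd_q p ha) (hc j)).
by rewrite -red_eq0 //; apply/eqP; apply: (hfree (fun j => (b j)%:~R)).
Qed.

Unset Implicit Arguments. Set Strict Implicit.

Theorem lemma2p1 (p alpha n k m : nat) (hp : prime p) (halpha : (0 < alpha)%N)
  (hkn : (k <= n)%N)
  (u : 'I_(n - k) -> 'rV[int]_n) (v : 'I_m -> 'rV[int]_n)
  (huu : forall i, ~~ ((p ^ alpha)%:Z %| zdot (u i) (u i))%Z)
  (huu' : forall i j, i != j -> ((p ^ alpha)%:Z %| zdot (u i) (u j))%Z)
  (hvv : forall i j, ((p ^ alpha)%:Z %| zdot (v i) (v j))%Z)
  (huv : forall i j, ((p ^ alpha)%:Z %| zdot (u i) (v j))%Z) :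
  (2 * \dim (span [seq modp_vec p (v j) | j <- enum 'I_m]) <= k)%N.
Proof.
set s := [seq modp_vec p (v j) | j <- enum 'I_m].
set W := span s. set r := \dim W.
pose X := vbasis W.
have hX i : exists c : 'I_m -> 'F_p, tnth X i = \sum_j c j *: modp_vec p (v j).
  have := vbasis_mem (mem_tnth i X); move: (tnth X i) => xi.
  rewrite /W span_def big_map big_enum /=.
  case/memv_sumP => vs hvs ->.
  have : forall j, exists kk : 'F_p, vs j = kk *: modp_vec p (v j).
    by move=> j; apply/vlineP/hvs.
  case/fin_all_exists => kk hk; exists kk; apply: eq_bigr => j _; exact: hk.
have [C hC] := fin_all_exists hX.
pose bv i := \sum_j liftF (C i j) *: v j.
have hbv i : modp_vec p (bv i) = tnth X i.
  by rewrite modp_vec_sum hC; apply: eq_bigr => j _; rewrite liftFK.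
pose B : 'M['F_p]_(r, n) := \matrix_(i, t) (tnth X i) 0 t.
have freeX : forall y : 'I_r -> 'F_p, \sum_j y j *: tnth X j = 0 -> forall j, y j = 0.
  move=> y hy; move/freeP: (basis_free (vbasisP W)) => /(_ y) H; apply: H.
  by rewrite -[RHS]hy; apply: eq_bigr => j _; rewrite (tnth_nth 0).
have rfB : row_free B.
  rewrite -kermx_eq0; apply/rowV0P => y /sub_kermxP yB.
  apply/rowP => j; rewrite [RHS]mxE.
  apply: (freeX (fun j => y ord0 j)).
  rewrite -[RHS]yB mulmx_sum_row; apply: eq_bigr => i _; congr (_ *: _).
  by apply/rowP => t; rewrite !mxE.
have [Y hY] := row_freeP rfB.
pose w j : 'rV[int]_n := \row_t liftF (Y t j).
have hG j l : (zdot (w j) (bv l))%:~R = ((j == l)%:R : 'F_p).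
  rewrite (red_zdot p) hbv.
  have := congr1 (fun M : 'M_r => M l j) hY; rewrite !mxE eq_sym => <-.
  by apply: eq_bigr => t _; rewrite !mxE liftFK // mulrC.
have hub i j : ((p ^ alpha)%:Z %| zdot (u i) (bv j))%Z.
  by rewrite zdot_sumr rpred_sum // => l _; rewrite dvdz_mull.
have hbb i j : ((p ^ alpha)%:Z %| zdot (bv i) (bv j))%Z.
  rewrite zdot_suml rpred_sum // => l _; rewrite dvdz_mull //.
  by rewrite zdot_sumr rpred_sum // => l' _; rewrite dvdz_mull.
have hfree (y : 'I_r -> 'F_p) : \sum_j y j *: modp_vec p (bv j) = 0 -> forall j, y j = 0.
  by move=> hy; apply: freeX; rewrite -[RHS]hy; apply: eq_bigr => j _; rewrite hbv.
pose F (i : 'I_(n - k + (r + r))) := match split i with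
  | inl a => u a
  | inr b => match split b with inl j => bv j | inr j => w j end end.
have sl a b (i : 'I_a) : split (lshift b i) = inl i.
  by rewrite -[lshift _ _]/(unsplit (inl _ i)) unsplitK.
have sr a b (i : 'I_b) : split (rshift a i) = inr i.
  by rewrite -[rshift _ _]/(unsplit (inr _ i)) unsplitK.
have hcore (x : 'I_(n - k + (r + r)) -> int) :
    \sum_i x i *: F i = 0 -> forall i, (p%:Z %| x i)%Z.
  move=> hx.
  have hS : \sum_i x (lshift _ i) *: u i + \sum_j x (rshift _ (lshift _ j)) *: bv j
      + \sum_j x (rshift _ (rshift _ j)) *: w j = 0.
    rewrite -[RHS]hx big_split_ord /= big_split_ord /= addrA /F.
    by congr (_ + _ + _); apply: eq_bigr => i _; rewrite ?sl ?sr ?sl ?sr.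
  have [hA [hB hC']] := core hp halpha huu huu' hub hbb hG hfree hS.
  move=> i; rewrite -(splitK i); case: (split i) => [a|b] //=.
  rewrite -(splitK b); case: (split b) => [j|j] //=.
have hinj := descent (prime_gt1 hp) hcore.
have := card_indep hinj.
lia.
Qed.
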